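(* Let $T$ be a real with $0<T\le1$. For every $\alpha\in\mathbb{R}$, $\alpha$ is an r.e. $T$-convergent real if and only if there exists a $T$-convergent, computable, increasing sequence of reals which converges to $\alpha$.
   Context: A sequence $\{a_n\}$ is increasing if $a_{n+1}>a_n$ for all $n$. An increasing sequence $\{a_n\}$ of reals is $T$-convergent if $\sum_{n=0}^\infty(a_{n+1}-a_n)^T<\infty$. A real is r.e. if it is the limit of a computable increasing sequence of rationals; an r.e. real $\alpha$ is $T$-convergent if there is a $T$-convergent computable increasing sequence of rationals converging to $\alpha$. A sequence $\{a_n\}$ of reals is computable if there is a total recursive $f:\mathbb{N}\times\mathbb{N}\to\mathbb{Q}$ with $|a_n-f(n,m)|<2^{-m}$ for all $n,m$. *)

(* Defs.v *)
From Stdlib Require Import Reals Arith.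
Open Scope R_scope.

(** * Total recursive functions (Kleene's total mu-recursive functions),
    presented as unary functions nat -> nat with Cantor pairing for
    multiple arguments. *)

Definition cpair (x y : nat) : nat := ((x + y) * (x + y + 1) / 2 + y)%nat.

Definition unpair (n : nat) : nat * nat :=
  let w := ((Nat.sqrt (8 * n + 1) - 1) / 2)%nat in
  let t := (w * (w + 1) / 2)%nat in
  ((w - (n - t))%nat, (n - t)%nat).

Definition ufst (n : nat) : nat := fst (unpair n).
Definition usnd (n : nat) : nat := snd (unpair n).

Inductive total_recursive : (nat -> nat) -> Prop :=
| tr_zero : total_recursive (fun _ => 0%nat)
| tr_succ : total_recursive S
| tr_id : total_recursive (fun n => n)
| tr_fst : total_recursive ufst
| tr_snd : total_recursive usnd
| tr_add : total_recursive (fun n => (ufst n + usnd n)%nat)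
| tr_mul : total_recursive (fun n => (ufst n * usnd n)%nat)
| tr_sub : total_recursive (fun n => (ufst n - usnd n)%nat)
| tr_div : total_recursive (fun n => (ufst n / usnd n)%nat)
| tr_leb : total_recursive (fun n => if Nat.leb (ufst n) (usnd n) then 1%nat else 0%nat)
| tr_pair : forall f g, total_recursive f -> total_recursive g ->
    total_recursive (fun n => cpair (f n) (g n))
| tr_comp : forall f g, total_recursive f -> total_recursive g ->
    total_recursive (fun n => f (g n))
| tr_primrec : forall f g h, total_recursive f -> total_recursive g ->
    (forall x, h (cpair x 0) = f x) ->
    (forall x k, h (cpair x (S k)) = g (cpair x (cpair k (h (cpair x k))))) ->
    (forall n, h n = h (cpair (ufst n) (usnd n))) ->
    total_recursive h
| tr_min : forall f h, total_recursive f ->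
    (forall x, f (cpair x (h x)) = 0%nat) ->
    (forall x y, (y < h x)%nat -> f (cpair x y) <> 0%nat) ->
    total_recursive h
| tr_ext : forall f g, total_recursive f -> (forall n, f n = g n) ->
    total_recursive g.

(** Rational number coded by three naturals: (a - b) / (c + 1). *)
Definition rat_code (a b c : nat) : R := (INR a - INR b) / INR (S c).

Definition computable_rat_seq (q : nat -> R) : Prop :=
  exists a b c : nat -> nat,
    total_recursive a /\ total_recursive b /\ total_recursive c /\
    forall n, q n = rat_code (a n) (b n) (c n).

Definition computable_rat_seq2 (f : nat -> nat -> R) : Prop :=
  exists a b c : nat -> nat,
    total_recursive a /\ total_recursive b /\ total_recursive c /\
    forall n m, f n m = rat_code (a (cpair n m)) (b (cpair n m)) (c (cpair n m)).

Definition computable_real_seq (a : nat -> R) : Prop :=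
  exists f : nat -> nat -> R, computable_rat_seq2 f /\
    forall n m, Rabs (a n - f n m) < / 2 ^ m.

Definition increasing_seq (a : nat -> R) : Prop := forall n, a n < a (S n).

Definition T_convergent (T : R) (a : nat -> R) : Prop :=
  increasing_seq a /\
  exists s : R,
    Un_cv (fun N => sum_f_R0 (fun n => Rpower (a (S n) - a n) T) N) s.

Definition re_real (alpha : R) : Prop :=
  exists q : nat -> R, computable_rat_seq q /\ increasing_seq q /\ Un_cv q alpha.

Definition re_T_convergent (T alpha : R) : Prop :=
  re_real alpha /\
  exists q : nat -> R, computable_rat_seq q /\ increasing_seq q /\
    T_convergent T q /\ Un_cv q alpha.

(* Main.v *)
Require Import Defs.
From Stdlib Require Import Reals Lra Lia Psatz Arith.
Open Scope R_scope.
Lemma tri_even s : exists m, (s*(s+1) = 2*m)%nat.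
Proof. induction s as [|s [m Hm]]. exists 0%nat; lia. exists (m + s + 1)%nat. nia. Qed.
Lemma unpair_cpair x y : unpair (cpair x y) = (x, y).
Proof.
  unfold unpair, cpair.
  destruct (tri_even (x+y)) as [m Hm].
  rewrite Hm.
  replace (2*m/2)%nat with m by (rewrite Nat.mul_comm, Nat.div_mul; lia).
  assert (H8: (8*(m+y)+1 = (2*(x+y)+1)*(2*(x+y)+1) + 8*y)%nat) by nia.
  rewrite H8.
  assert (Hw : ((Nat.sqrt ((2*(x+y)+1)*(2*(x+y)+1) + 8*y) - 1)/2 = x+y)%nat).
  { remember (x+y)%nat as s.
    destruct (Nat.sqrt_spec' ((2*s+1)*(2*s+1) + 8*y)) as [H1 H2].
    remember (Nat.sqrt ((2*s+1)*(2*s+1) + 8*y)) as r.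
    assert (2*s+1 <= r)%nat.
    { destruct (le_lt_dec (2*s+1) r) as [h|h]; auto. exfalso.
      assert (S r * S r <= (2*s+1)*(2*s+1))%nat by (apply Nat.mul_le_mono; lia). lia. }
    assert (r <= 2*s+2)%nat.
    { destruct (le_lt_dec r (2*s+2)) as [h|h]; auto. exfalso.
      assert ((2*s+3)*(2*s+3) <= r*r)%nat by (apply Nat.mul_le_mono; lia). nia. }
    assert (r = 2*s+1 \/ r = 2*s+2)%nat as [-> | ->] by lia.
    - replace (2*s+1-1)%nat with (s*2)%nat by lia. rewrite Nat.div_mul; lia.
    - replace (2*s+2-1)%nat with (1+s*2)%nat by lia. rewrite Nat.div_add by lia. simpl. lia. }
  rewrite Hw, Hm.
  replace (2*m/2)%nat with m by (rewrite Nat.mul_comm, Nat.div_mul; lia).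
  f_equal; lia.
Qed.

Lemma ufst_cpair x y : ufst (cpair x y) = x.
Proof. unfold ufst; now rewrite unpair_cpair. Qed.
Lemma usnd_cpair x y : usnd (cpair x y) = y.
Proof. unfold usnd; now rewrite unpair_cpair. Qed.

Lemma tr_add2 f g : total_recursive f -> total_recursive g -> total_recursive (fun n => (f n + g n)%nat).
Proof. intros Hf Hg. apply (tr_ext (fun n => (ufst (cpair (f n) (g n)) + usnd (cpair (f n) (g n)))%nat)).
  apply (tr_comp (fun n => ufst n + usnd n)%nat). apply tr_add. now apply tr_pair.
  intro n; now rewrite ufst_cpair, usnd_cpair. Qed.
Lemma tr_mul2 f g : total_recursive f -> total_recursive g -> total_recursive (fun n => (f n * g n)%nat).
Proof. intros Hf Hg. apply (tr_ext (fun n => (ufst (cpair (f n) (g n)) * usnd (cpair (f n) (g n)))%nat)).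
  apply (tr_comp (fun n => ufst n * usnd n)%nat). apply tr_mul. now apply tr_pair.
  intro n; now rewrite ufst_cpair, usnd_cpair. Qed.
Lemma tr_sub2 f g : total_recursive f -> total_recursive g -> total_recursive (fun n => (f n - g n)%nat).
Proof. intros Hf Hg. apply (tr_ext (fun n => (ufst (cpair (f n) (g n)) - usnd (cpair (f n) (g n)))%nat)).
  apply (tr_comp (fun n => ufst n - usnd n)%nat). apply tr_sub. now apply tr_pair.
  intro n; now rewrite ufst_cpair, usnd_cpair. Qed.
Lemma tr_const1 : total_recursive (fun _ => 1%nat).
Proof. apply (tr_comp S (fun _ => 0%nat)); constructor. Qed.
Lemma tr_const3 : total_recursive (fun _ => 3%nat).
Proof. apply (tr_comp S (fun _ => 2%nat)). constructor.
  apply (tr_comp S (fun _ => 1%nat)). constructor. apply tr_const1. Qed.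

Lemma tr_pow2 : total_recursive (fun n => 2 ^ n)%nat.
Proof.
  assert (H : total_recursive (fun n => 2 ^ usnd n)%nat).
  { apply (tr_primrec (fun _ => 1%nat) (fun n => usnd (usnd n) + usnd (usnd n))%nat).
    - apply tr_const1.
    - apply tr_add2; apply (tr_comp usnd usnd); constructor.
    - intro x; now rewrite usnd_cpair.
    - intros x k. rewrite !usnd_cpair. simpl. lia.
    - intro n. now rewrite usnd_cpair. }
  apply (tr_ext (fun n => 2 ^ usnd (cpair n n))%nat).
  apply (tr_comp (fun n => 2 ^ usnd n)%nat); [exact H | apply tr_pair; constructor].
  intro n; now rewrite usnd_cpair.
Qed.

Lemma exp_le_mono x y : x <= y -> exp x <= exp y.
Proof. intros [H|H]. left; now apply exp_increasing. subst; lra. Qed.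

Lemma Rpower_ge_self u T : 0 < u -> u <= 1 -> 0 < T -> T <= 1 -> u <= Rpower u T.
Proof.
  intros Hu Hu1 HT HT1. unfold Rpower.
  assert (ln u <= 0).
  { destruct Hu1 as [Hlt|Heq]. left; rewrite <- ln_1; now apply ln_increasing. subst; rewrite ln_1; lra. }
  rewrite <- (exp_ln u) at 1 by lra. apply exp_le_mono. nra.
Qed.

Lemma Rpower_pos x T : 0 < Rpower x T.
Proof. unfold Rpower; apply exp_pos. Qed.

Lemma Rpower_subadd x y T : 0 < x -> 0 < y -> 0 < T -> T <= 1 ->
  Rpower (x + y) T <= Rpower x T + Rpower y T.
Proof.
  intros Hx Hy HT HT1.
  set (u := x / (x+y)). set (v := y / (x+y)).
  assert (Hx' : x = u * (x+y)) by (unfold u; field; lra).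
  assert (Hy' : y = v * (x+y)) by (unfold v; field; lra).
  assert (0 < u) by (unfold u; apply Rdiv_lt_0_compat; lra).
  assert (0 < v) by (unfold v; apply Rdiv_lt_0_compat; lra).
  assert (u <= 1) by (unfold u; apply Rmult_le_reg_r with (x+y); [lra|]; field_simplify; lra).
  assert (v <= 1) by (unfold v; apply Rmult_le_reg_r with (x+y); [lra|]; field_simplify; lra).
  assert (Huv : u + v = 1) by (unfold u, v; field; lra).
  assert (E1 : Rpower x T = Rpower u T * Rpower (x+y) T) by (rewrite Rpower_mult_distr by lra; now rewrite <- Hx').
  assert (E2 : Rpower y T = Rpower v T * Rpower (x+y) T) by (rewrite Rpower_mult_distr by lra; now rewrite <- Hy').
  rewrite E1, E2.
  pose proof (Rpower_ge_self u T ltac:(lra) ltac:(lra) HT HT1).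
  pose proof (Rpower_ge_self v T ltac:(lra) ltac:(lra) HT HT1).
  pose proof (Rpower_pos (x+y) T). nra.
Qed.

Lemma Rpower_geom k T : 0 < T ->
  Rpower (3 * (/2)^k) T = Rpower 3 T * (Rpower (/2) T) ^ k.
Proof.
  intros HT. rewrite <- Rpower_mult_distr by (try apply pow_lt; lra).
  f_equal. rewrite <- (Rpower_pow k (/2)) by lra.
  rewrite Rpower_mult, <- (Rpower_pow k (Rpower (/2) T)) by apply Rpower_pos.
  rewrite Rpower_mult. f_equal. ring.
Qed.

Lemma Rpower_half_lt1 T : 0 < T -> Rpower (/2) T < 1.
Proof.
  intros HT. unfold Rpower. rewrite <- exp_0. apply exp_increasing.
  assert (ln (/2) < 0) by (rewrite <- ln_1; apply ln_increasing; lra). nra.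
Qed.

Lemma tr_diag g : total_recursive g -> total_recursive (fun k => g (cpair k k)).
Proof. intro H. apply (tr_comp g (fun k => cpair k k)); auto. apply tr_pair; constructor. Qed.

Lemma forward_comp q : computable_rat_seq q -> computable_real_seq q.
Proof.
  intros [a [b [c [Ha [Hb [Hc Hq]]]]]].
  exists (fun n m => q n). split.
  - exists (fun n => a (ufst n)), (fun n => b (ufst n)), (fun n => c (ufst n)).
    repeat split; try (apply (tr_comp _ ufst); auto; constructor).
    intros n m. rewrite ufst_cpair. apply Hq.
  - intros n m. replace (q n - q n) with 0 by ring. rewrite Rabs_R0.
    apply Rinv_0_lt_compat, pow_lt; lra.
Qed.

Lemma backward T alpha (hT0: 0<T) (hT1: T<=1) (a : nat -> R) :
  T_convergent T a -> computable_real_seq a -> Un_cv a alpha -> re_T_convergent T alpha.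
Proof.
  intros [Hinc [s Hs]] [f [[A [B [C [HA [HB [HC Hf]]]]]] Hfb]] Hcv.
  set (A' := fun k => (2^k * A (cpair k k))%nat).
  set (B' := fun k => (2^k * B (cpair k k) + 3 * (C (cpair k k) + 1))%nat).
  set (C' := fun k => ((C (cpair k k) + 1) * 2^k - 1)%nat).
  set (p := fun k => rat_code (A' k) (B' k) (C' k)).
  assert (Hp : forall k, p k = f k k - 3 * (/2)^k).
  { intro k. unfold p, rat_code, A', B', C'. rewrite Hf. unfold rat_code.
    assert (Hpos: (2^k <> 0)%nat) by (apply Nat.pow_nonzero; lia).
    replace (S ((C (cpair k k) + 1) * 2 ^ k - 1)) with ((C (cpair k k) + 1) * 2 ^ k)%nat by nia.
    rewrite pow_inv, S_INR, !mult_INR, !plus_INR, !mult_INR, !plus_INR, pow_INR.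
    replace (INR 2) with 2 by (simpl; lra). replace (INR 3) with 3 by (simpl; lra).
    replace (INR 1) with 1 by (simpl; lra). assert (0 < 2^k) by (apply pow_lt; lra).
    assert (0 <= INR (C (cpair k k))) by apply pos_INR.
    field. lra. }
  assert (Hcomp : computable_rat_seq p).
  { exists A', B', C'. repeat split.
    - apply (tr_mul2 (fun k => 2^k)%nat (fun k => A (cpair k k))). apply tr_pow2. now apply tr_diag.
    - apply (tr_add2 (fun k => 2^k * B (cpair k k))%nat (fun k => 3 * (C (cpair k k) + 1))%nat).
      apply (tr_mul2 (fun k => 2^k)%nat (fun k => B (cpair k k))). apply tr_pow2. now apply tr_diag.
      apply (tr_mul2 (fun _ => 3%nat) (fun k => C (cpair k k) + 1)%nat). apply tr_const3.
      apply (tr_add2 (fun k => C (cpair k k)) (fun _ => 1%nat)). now apply tr_diag. apply tr_const1.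
    - apply (tr_sub2 (fun k => (C (cpair k k) + 1) * 2^k)%nat (fun _ => 1%nat)); [|apply tr_const1].
      apply (tr_mul2 (fun k => C (cpair k k) + 1)%nat (fun k => 2^k)%nat); [|apply tr_pow2].
      apply (tr_add2 (fun k => C (cpair k k)) (fun _ => 1%nat)). now apply tr_diag. apply tr_const1. }
  assert (Hb : forall k, a k - (/2)^k < f k k < a k + (/2)^k).
  { intro k. pose proof (Hfb k k) as H. rewrite <- pow_inv in H.
    apply Rabs_def2 in H. lra. }
  assert (Hinc2 : forall k, a (S k) - a k < p (S k) - p k < a (S k) - a k + 3 * (/2)^k).
  { intro k. rewrite !Hp. pose proof (Hb k). pose proof (Hb (S k)). simpl pow in *.
    assert (0 < (/2)^k) by (apply pow_lt; lra). lra. }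
  assert (Hpinc : increasing_seq p).
  { intro k. pose proof (Hinc2 k). pose proof (Hinc k). lra. }
  assert (Hpcv : Un_cv p alpha).
  { intros eps Heps.
    destruct (Hcv (eps/2)) as [N1 HN1]; [lra|].
    destruct (pow_lt_1_zero (/2) ltac:(rewrite Rabs_pos_eq; lra) (eps/8)) as [N2 HN2]; [lra|].
    exists (Nat.max N1 N2). intros n Hn.
    specialize (HN1 n ltac:(lia)). specialize (HN2 n ltac:(lia)).
    unfold R_dist in *. rewrite Rabs_pos_eq in HN2 by (apply pow_le; lra).
    pose proof (Hb n). rewrite Hp. apply Rabs_def2 in HN1.
    assert (0 < (/2)^n) by (apply pow_lt; lra).
    apply Rabs_def1; lra. }
  split.
  - exists p. auto.
  - exists p. repeat split; auto.
    set (r := Rpower (/2) T). set (R3 := Rpower 3 T).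
    assert (Hr1 : r < 1) by (apply Rpower_half_lt1; lra).
    assert (Hr0 : 0 < r) by apply Rpower_pos.
    assert (HR3 : 0 < R3) by apply Rpower_pos.
    set (Sa := fun N => sum_f_R0 (fun n => Rpower (a (S n) - a n) T) N).
    set (Sp := fun N => sum_f_R0 (fun n => Rpower (p (S n) - p n) T) N).
    assert (HSa : forall N, Sa N <= s).
    { apply growing_ineq; auto. intro n. unfold Sa. simpl. pose proof (Rpower_pos (a (S (S n)) - a (S n)) T). lra. }
    assert (Hterm : forall n, Rpower (p (S n) - p n) T <= Rpower (a (S n) - a n) T + r^n * R3).
    { intro n. pose proof (Hinc2 n). pose proof (Hinc n).
      assert (0 < (/2)^n) by (apply pow_lt; lra).
      eapply Rle_trans. apply Rle_Rpower_l. lra. split. lra. left. apply (proj2 (Hinc2 n)).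
      eapply Rle_trans. apply Rpower_subadd; lra.
      unfold r, R3. rewrite Rpower_geom by lra. lra. }
    assert (HSp : forall N, Sp N <= s + R3 / (1 - r)).
    { intro N. unfold Sp. eapply Rle_trans. apply sum_growing. apply Hterm.
      rewrite plus_sum, <- (scal_sum (fun i => r ^ i) N R3), tech3 by lra. fold (Sa N).
      pose proof (HSa N). assert (0 < r ^ S N) by (apply pow_lt; lra).
      assert (R3 * ((1 - r ^ S N) / (1 - r)) <= R3 / (1 - r)).
      { unfold Rdiv. assert (0 < / (1 - r)) by (apply Rinv_0_lt_compat; lra).
        assert (0 < R3 * / (1 - r)) by (apply Rmult_lt_0_compat; lra). nra. }
      lra. }
    destruct (growing_cv Sp) as [l Hl].
    + intro n. unfold Sp. simpl. pose proof (Rpower_pos (p (S (S n)) - p (S n)) T). lra.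
    + exists (s + R3 / (1 - r)). intros x [i ->]. apply HSp.
    + exists l. exact Hl.
Qed.

Theorem mainTheorem2 (T : R) (hT0 : 0 < T) (hT1 : T <= 1) :
  forall alpha : R,
    re_T_convergent T alpha <->
    exists a : nat -> R,
      T_convergent T a /\ computable_real_seq a /\ increasing_seq a /\ Un_cv a alpha.
Proof.
  intro alpha. split.
  - intros [_ [q [Hq [Hinc [HTc Hcv]]]]]. exists q. split; [exact HTc|]. split; [now apply forward_comp|]. auto.
  - intros [a [Ha [Hc [_ Hcv]]]]. now apply (backward T alpha hT0 hT1 a).
Qed.
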